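(* Let $r,s,t$ be integers with $1\le r\le s\le t$ and $n=r+s+t+1$. Then the $(2r+1)$-fault diameter of the exchanged 3-ary $n$-cube satisfies $D^{f}_{2r+1}(E3C(r,s,t))\ge r+s+t+4=n+3$.
   Context: The exchanged 3-ary $n$-cube $E3C(r,s,t)$ ($r,s,t\ge1$, $n=r+s+t+1$): vertices are strings $x=x[r+s+t]\cdots x[1]x[0]$ with all $x[i]\in\{0,1,2\}$, written $x=ABCd$ where $A=x[r+s+t]\cdots x[s+t+1]\in\{0,1,2\}^r$, $B=x[s+t]\cdots x[t+1]\in\{0,1,2\}^s$, $C=x[t]\cdots x[1]\in\{0,1,2\}^t$, $d=x[0]$. Two distinct vertices $x=ABCd$, $y=A'B'C'd'$ are adjacent iff one of: (E0) $A=A',B=B',C=C'$ and $d\ne d'$; (E1) $d=d'=0$, $A=A'$, $B=B'$ and $C,C'$ differ in exactly one position; (E2) $d=d'=1$, $A=A'$, $C=C'$ and $B,B'$ differ in exactly one position; (E3) $d=d'=2$, $B=B'$, $C=C'$ and $A,A'$ differ in exactly one position. For a connected graph $G$ and positive integer $\alpha\le\kappa(G)-1$ ($\kappa$ = vertex connectivity), the $\alpha$-fault diameter is $D^f_\alpha(G)=\max\{d_{G-F}(u,v): u\ne v\in V(G),\ F\subseteq V(G)\setminus\{u,v\},\ |F|=\alpha\}$, where $d_{G-F}$ is the shortest-path distance in $G-F$. (It is known that $\kappa(E3C(r,s,t))=2r+2$ when $r\le s\le t$.) *)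

(* Defs.v *)
From mathcomp Require Import all_boot.
Set Implicit Arguments. Unset Strict Implicit. Unset Printing Implicit Defensive.

Fixpoint reach (T : finType) (adj : rel T) (F : {set T}) (u : T) (k : nat)
  : {set T} :=
  match k with
  | 0 => if u \in F then set0 else [set u]
  | k'.+1 => reach adj F u k' :|:
             [set y | (y \notin F) && [exists x in reach adj F u k', adj x y]]
  end.

Definition fdist (T : finType) (adj : rel T) (F : {set T}) (u v : T) : nat :=
  find (fun k => v \in reach adj F u k) (iota 0 #|T|).

Definition fault_diameter (T : finType) (adj : rel T) (alpha : nat) : nat :=
  \max_(u : T) \max_(v : T)
    \max_(F : {set T} | [&& u != v, u \notin F, v \notin F & #|F| == alpha])
      fdist adj F u v.

(* vertices x = x[r+s+t] ... x[1] x[0], x[i] in {0,1,2};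
   d = x[0], C = x[t..1], B = x[s+t..t+1], A = x[r+s+t..s+t+1]. *)
Definition E3C_vertex (r s t : nat) := {ffun 'I_(r + s + t).+1 -> 'I_3}.

Definition E3C_adj (r s t : nat) : rel (E3C_vertex r s t) :=
  fun x y =>
    [exists i : 'I_(r + s + t).+1,
      ([set j | x j != y j] == [set i]) &&
      [|| (i == ord0 :> 'I_(r + s + t).+1)
        , ((x ord0 : nat) == 0) && (1 <= i <= t)
        , ((x ord0 : nat) == 1) && (t < i <= s + t)
        | ((x ord0 : nat) == 2) && (s + t < i)]].

(* Main.v *)
Require Import Defs.
From mathcomp Require Import all_boot.
From mathcomp Require Import zify.
Set Implicit Arguments. Unset Strict Implicit.

Definition uu r s t : E3C_vertex r s t :=
  [ffun j => if val j == 0 then (@Ordinal 3 2 isT) else ord0].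
Definition ww r s t : E3C_vertex r s t :=
  [ffun j => if val j == 0 then (@Ordinal 3 1 isT) else ord0].
Definition vv r s t : E3C_vertex r s t := [ffun j => @Ordinal 3 1 isT].

Definition cnt r s t (P : nat -> bool) (x : E3C_vertex r s t) : nat :=
  #|[set j | P (val j) && (val (x j) != 0)]|.

Definition ee (d : nat) (A C : bool) : nat :=
  if d == 0 then (if A then 3 else 2)
  else if d == 1 then (if A then (if C then 4 else 3) else (if C then 3 else 1))
  else (if C then 3 else 2).

Definition gg r s t (x : E3C_vertex r s t) : nat :=
  if x == uu r s t then 0 else
  cnt (fun j => 0 < j) x +
  ee (val (x ord0)) (0 < cnt (fun j => s + t < j) x) (0 < cnt (fun j => 0 < j <= t) x).

Lemma ee_lip d d' A C : d < 3 -> d' < 3 -> ee d' A C <= (ee d A C).+1.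
Proof. by case: d => [|[|[|]]] // _; case: d' => [|[|[|]]] // _; case: A; case: C. Qed.

Lemma adjP r s t (x y : E3C_vertex r s t) : E3C_adj x y ->
  exists i : 'I_(r + s + t).+1, (forall j, (x j != y j) = (j == i)) /\
      [|| (i == ord0 :> 'I_(r + s + t).+1)
        , ((x ord0 : nat) == 0) && (1 <= i <= t)
        , ((x ord0 : nat) == 1) && (t < i <= s + t)
        | ((x ord0 : nat) == 2) && (s + t < i)].
Proof.
move/existsP=> [i /andP[/eqP hS hc]]; exists i; split => // j.
by move/setP: hS => /(_ j); rewrite !inE.
Qed.

Lemma cnt_eq r s t P (x y : E3C_vertex r s t) i :
  (forall j, (x j != y j) = (j == i)) -> ~~ P (val i) -> cnt P x = cnt P y.
Proof.
move=> h hP; apply: eq_card => j; rewrite !inE.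
case: (eqVneq j i) => [->|ne]; first by rewrite (negbTE hP).
by have := h j; rewrite (negbTE ne) => /negbFE/eqP ->.
Qed.

Lemma cnt_le r s t P (x y : E3C_vertex r s t) i :
  (forall j, (x j != y j) = (j == i)) -> cnt P y <= (cnt P x).+1.
Proof.
move=> h; rewrite /cnt.
apply: leq_trans (_ : #|i |: [set j | P (val j) && (val (x j) != 0)]| <= _).
  apply: subset_leq_card; apply/subsetP => j; rewrite !inE.
  case: (eqVneq j i) => [->//|ne] /=.
  by have := h j; rewrite (negbTE ne) => /negbFE/eqP ->.
by rewrite cardsU1; case: (_ \notin _).
Qed.

Lemma uu0 r s t : val (uu r s t ord0) = 2. Proof. by rewrite ffunE. Qed.
Lemma ww0 r s t : val (ww r s t ord0) = 1. Proof. by rewrite ffunE. Qed.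

Lemma cnt_ww r s t P : ~~ P 0 -> cnt P (ww r s t) = 0.
Proof.
move=> hP; apply/eqP; rewrite cards_eq0; apply/eqP/setP => j; rewrite !inE ffunE.
case: ifP => [/eqP e|_]; last by rewrite andbF.
by rewrite e (negbTE hP).
Qed.

Lemma ww_neq r s t : ww r s t != uu r s t.
Proof. by apply/eqP => e; have := ww0 r s t; rewrite e uu0. Qed.

Lemma gg_ww r s t : gg (ww r s t) = 1.
Proof. by rewrite /gg (negbTE (ww_neq _ _ _)) !cnt_ww // ww0. Qed.

Lemma gg_lip r s t (x y : E3C_vertex r s t) : E3C_adj x y ->
  (x = uu r s t -> y = ww r s t) -> gg y <= (gg x).+1.
Proof.
move=> /adjP [i [h hc]] hu.
have same : forall j, j != i -> x j = y j.
  by move=> j ne; have := h j; rewrite (negbTE ne) => /negbFE/eqP.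
case/or4P: hc => [/eqP ei | /andP[x0 /andP[i1 it]] | /andP[x0 /andP[ti ist]] | /andP[x0 sti]].
- subst i.
  case: (eqVneq x (uu r s t)) => [ex | nx].
    by rewrite (hu ex) gg_ww ex /gg eqxx.
  rewrite /gg (negbTE nx); case: (eqVneq y (uu r s t)) => // ny.
  rewrite !(@cnt_eq r s t _ x y ord0) //.
  by rewrite -[X in _ <= X]addnS leq_add2l; apply: ee_lip; apply: ltn_ord.
- have i0 : i != ord0 by rewrite -(inj_eq val_inj) /=; lia.
  have y0 : y ord0 = x ord0 by rewrite (same ord0) // eq_sym.
  have nx : x != uu r s t by apply/eqP => ex; move: x0; rewrite ex uu0.
  have ny : y != uu r s t by apply/eqP => ey; move: x0; rewrite -y0 ey uu0.
  rewrite /gg (negbTE nx) (negbTE ny) y0 (eqP x0 : val (x ord0) = _).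
  rewrite (@cnt_eq r s t (fun j => s + t < j) x y i) //=; last by rewrite -ltnNge; lia.
  have := @cnt_le r s t (fun j => 0 < j) x y i h.
  by rewrite /ee /=; lia.
- have i0 : i != ord0 by rewrite -(inj_eq val_inj) /=; lia.
  have y0 : y ord0 = x ord0 by rewrite (same ord0) // eq_sym.
  have nx : x != uu r s t by apply/eqP => ex; move: x0; rewrite ex uu0.
  have ny : y != uu r s t by apply/eqP => ey; move: x0; rewrite -y0 ey uu0.
  rewrite /gg (negbTE nx) (negbTE ny) y0 (eqP x0 : val (x ord0) = _).
  rewrite (@cnt_eq r s t (fun j => s + t < j) x y i) //=; last by rewrite -ltnNge; lia.
  rewrite (@cnt_eq r s t (fun j => 0 < j <= t) x y i) //=; last by apply/negP; lia.
  have := @cnt_le r s t (fun j => 0 < j) x y i h.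
  lia.
- have i0 : i != ord0 by rewrite -(inj_eq val_inj) /=; lia.
  have y0 : y ord0 = x ord0 by rewrite (same ord0) // eq_sym.
  rewrite /gg; case: (eqVneq y (uu r s t)) => // ny.
  case: (eqVneq x (uu r s t)) => [ex | nx].
    by have := ww0 r s t; rewrite -(hu ex) y0 (eqP x0 : val (x ord0) = _).
  rewrite y0 (eqP x0 : val (x ord0) = _).
  rewrite (@cnt_eq r s t (fun j => 0 < j <= t) x y i) //=; last by apply/negP; lia.
  have := @cnt_le r s t (fun j => 0 < j) x y i h.
  by rewrite /ee /=; lia.
Qed.

Lemma reach_gg r s t (F : {set E3C_vertex r s t})
  (hF : forall y, E3C_adj (uu r s t) y -> y \notin F -> y = ww r s t) k x :
  x \in reach (@E3C_adj r s t) F (uu r s t) k -> (gg x <= k) && (x \notin F).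
Proof.
elim: k x => [|k IH] x /=.
  case: ifP => hu; rewrite ?inE // => /eqP ->.
  by rewrite /gg eqxx hu.
rewrite inE => /orP[/IH /andP[h1 h2] | ].
  by rewrite h2 andbT (leq_trans h1).
rewrite inE => /andP[hy /existsP[z /andP[hz hzy]]].
have /andP[gz zF] := IH z hz.
rewrite hy andbT; apply: leq_trans (gg_lip hzy _) _ => //.
by move=> ez; subst z; apply: hF.
Qed.

Lemma find_ge (P : pred nat) m M : m <= M -> (forall k, k < m -> ~~ P k) ->
  m <= find P (iota 0 M).
Proof.
move=> hm hP; case: (leqP m (find P (iota 0 M))) => // hlt.
have hhas : has P (iota 0 M) by rewrite has_find size_iota (leq_trans hlt hm).
have := nth_find 0 hhas; rewrite nth_iota ?add0n; last by rewrite (leq_trans hlt hm).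
by rewrite (negbTE (hP _ hlt)).
Qed.

Lemma pad (T : finType) (B : {set T}) m : forall A : {set T},
  A \subset B -> #|A| + m <= #|B| ->
  exists C : {set T}, [/\ A \subset C, C \subset B & #|C| = #|A| + m].
Proof.
elim: m => [|m IH] A hAB hc; first by exists A; rewrite addn0.
have : ~~ (B \subset A).
  apply/negP => hBA; have := subset_leq_card hBA; lia.
case/subsetPn => x xB xA.
have hx : x |: A \subset B by rewrite subUset sub1set xB hAB.
have [|C [h1 h2 h3]] := IH _ hx; first by rewrite cardsU1 xA; lia.
exists C; split => //; last by rewrite h3 cardsU1 xA; lia.
by apply: subset_trans h1; apply: subsetUr.
Qed.

Lemma pow3 m : 2 <= m -> m + 3 <= 3 ^ m.
Proof.
elim: m => [|m IH] //; case: m IH => [|m] IH // _.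
case: m IH => [|m] IH //.
rewrite expnS; have := IH isT; lia.
Qed.

Definition fA r s t (z : ('I_r * 'I_2) + unit) : E3C_vertex r s t :=
  match z with
  | inl (a, b) => [ffun j => if val j == s + t + 1 + a
                             then (@Ordinal 3 b.+1 (ltn_ord b)) else uu r s t j]
  | inr _ => [ffun j => if val j == 0 then ord0 else uu r s t j]
  end.

Lemma fA_surj r s t (y : E3C_vertex r s t) :
  E3C_adj (uu r s t) y -> y != ww r s t -> exists z, y = @fA r s t z.
Proof.
move=> /adjP [i [h hc]] nw.
have same : forall j, j != i -> uu r s t j = y j.
  by move=> j ne; have := h j; rewrite (negbTE ne) => /negbFE/eqP.
have hu0 : (uu r s t ord0 : nat) = 2 by rewrite uu0.
case/or4P: hc => [/eqP ei | /andP[x0 _] | /andP[x0 _] | /andP[_ sti]];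
  [ | by rewrite hu0 in x0 | by rewrite hu0 in x0 | ].
- subst i; exists (inr tt).
  have : uu r s t ord0 != y ord0 by rewrite h.
  rewrite -(inj_eq val_inj) uu0 => hy.
  have hy1 : val (y ord0) != 1.
    apply/negP => /eqP h1.
    case/eqP: nw; apply/ffunP => j; rewrite ffunE.
    case: ifP => [/eqP j0 | j0].
      have -> : j = ord0 by apply: val_inj.
      by apply: val_inj => /=.
    rewrite -same; first by rewrite ffunE j0.
    by rewrite -(inj_eq val_inj) /= j0.
  have hy' : val (y ord0) = 0.
    have : val (y ord0) < 3 := ltn_ord _.
    move: hy hy1; set n := val (y ord0); clearbody n; lia.
  apply/ffunP => j; rewrite ffunE /=.
  case: ifP => [/eqP j0 | j0].
    have -> : j = ord0 by apply: val_inj.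
    by apply: val_inj.
  rewrite -same; first by rewrite ffunE j0.
  by rewrite -(inj_eq val_inj) /= j0.
- have lta : i - (s + t + 1) < r by have := ltn_ord i; lia.
  have vi : val i = i := erefl.
  have ui : val (uu r s t i) = 0 by rewrite ffunE ifN // vi; lia.
  have : uu r s t i != y i by rewrite h.
  rewrite -(inj_eq val_inj) ui => hyi.
  have ltb : val (y i) - 1 < 2 by have : val (y i) < 3 := ltn_ord _; lia.
  exists (inl (Ordinal lta, Ordinal ltb)).
  apply/ffunP => j; rewrite ffunE /=.
  case: ifP => [/eqP j0 | j0].
    have -> : j = i by apply: val_inj; change (nat_of_ord j = nat_of_ord i); lia.
    have vyi : val (y i) = y i := erefl.
    rewrite vyi in hyi; apply: val_inj => /=; lia.
  rewrite -same //; apply/negP => /eqP ji; subst j; move/negP: j0; apply; apply/eqP; lia.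
Qed.

Lemma fA_nuv r s t z : 1 <= t -> @fA r s t z \notin [set uu r s t; vv r s t].
Proof.
move=> ht; rewrite !inE negb_or; apply/andP; split; apply/eqP.
- case: z => [[a b]|[]] e.
    have lt : s + t + 1 + a < (r + s + t).+1 by have := ltn_ord a; lia.
    have := congr1 (fun f : E3C_vertex r s t => val (f (Ordinal lt))) e.
    by rewrite /= !ffunE /= eqxx ifN //; lia.
  have := congr1 (fun f : E3C_vertex r s t => val (f ord0)) e.
  by rewrite /= !ffunE.
- have lt : 1 < (r + s + t).+1 by lia.
  move=> e; have := congr1 (fun f : E3C_vertex r s t => val (f (Ordinal lt))) e.
  case: z {e} => [[a b]|[]]; rewrite /= !ffunE /= ?ifN //; lia.
Qed.

Lemma gg_vv r s t : 1 <= r -> 1 <= t -> r + s + t + 4 <= gg (vv r s t).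
Proof.
move=> hr ht.
have nv : vv r s t != uu r s t.
  by apply/eqP => e; have := congr1 (fun f : E3C_vertex r s t => val (f ord0)) e; rewrite !ffunE.
rewrite /gg (negbTE nv).
have -> : cnt (fun j => 0 < j) (vv r s t) = r + s + t.
  rewrite /cnt (_ : [set j | _] = [set~ ord0]) ?cardsC1 ?card_ord //.
  apply/setP => j; rewrite !inE ffunE /= andbT -(inj_eq val_inj) /=; lia.
have -> : 0 < cnt (fun j => s + t < j) (vv r s t).
  apply/card_gt0P; exists ord_max; rewrite inE ffunE /=; lia.
have lt : 1 < (r + s + t).+1 by lia.
have -> : 0 < cnt (fun j => 0 < j <= t) (vv r s t).
  apply/card_gt0P; exists (Ordinal lt); rewrite inE ffunE /=; lia.
by rewrite ffunE.
Qed.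

Theorem theorem1 (r s t : nat) :
  1 <= r -> r <= s -> s <= t ->
  (r + s + t + 1) + 3 <= fault_diameter (@E3C_adj r s t) (2 * r + 1).
Proof.
move=> hr hrs hst.
set Aimg := [set @fA r s t z | z in {: ('I_r * 'I_2) + unit}].
set B := ~: [set uu r s t; vv r s t].
have uv : uu r s t != vv r s t.
  by apply/eqP => e; have := congr1 (fun f : E3C_vertex r s t => val (f ord0)) e; rewrite !ffunE.
have cardT : #|E3C_vertex r s t| = 3 ^ (r + s + t + 1).
  by rewrite card_ffun !card_ord addn1.
have hpow : r + s + t + 1 + 3 <= 3 ^ (r + s + t + 1) by apply: pow3; lia.
have hAB : Aimg \subset B.
  apply/subsetP => y /imsetP [z _ ->]; rewrite inE; exact: (@fA_nuv r s t z (leq_trans hr (leq_trans hrs hst))).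
have cA : #|Aimg| <= 2 * r + 1.
  apply: leq_trans (leq_imset_card _ _) _.
  by rewrite card_sum card_prod !card_ord card_unit; lia.
have cB : #|B| = 3 ^ (r + s + t + 1) - 2.
  rewrite /B; have := cardsC [set uu r s t; vv r s t]; rewrite cards2 uv cardT; lia.
have hle : #|Aimg| + (2 * r + 1 - #|Aimg|) <= #|B|.
  rewrite cB; have := hpow; lia.
have [F [h1 h2 h3]] := pad hAB hle.
have cF : #|F| = 2 * r + 1 by rewrite h3; lia.
have hF : forall y, E3C_adj (uu r s t) y -> y \notin F -> y = ww r s t.
  move=> y hy yF; apply/eqP; apply: contraNT yF => nw.
  have [z ->] := fA_surj hy nw.
  by apply: (subsetP h1); apply: imset_f.
have uF : uu r s t \notin F.
  by apply/negP => /(subsetP h2); rewrite !inE eqxx.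
have vF : vv r s t \notin F.
  by apply/negP => /(subsetP h2); rewrite !inE eqxx orbT.
apply: leq_trans (_ : fdist (@E3C_adj r s t) F (uu r s t) (vv r s t) <= _).
  rewrite /fdist; apply: find_ge; first by rewrite cardT; have := hpow; lia.
  move=> k hk; apply/negP => /(reach_gg hF) /andP[hg _].
  have := @gg_vv r s t hr (leq_trans hr (leq_trans hrs hst)); lia.
rewrite /fault_diameter.
rewrite (bigD1 (uu r s t)) //= leq_max; apply/orP; left.
rewrite (bigD1 (vv r s t)) //= leq_max; apply/orP; left.
rewrite (bigD1 F) /= ?leq_maxl //.
by rewrite uv uF vF cF eqxx.
Qed.
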